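(* Consider the voter model with zealots on the complete graph with $n$ nodes, $z_0$ zealots holding opinion $0$ and $z_1$ zealots holding opinion $1$, where $z_0+z_1>0$. Let $N_1(t)$ be the number of opinion-1 holders at time $t$ (including 1-zealots), a continuous-time Markov chain on $\mathcal{S}=\{z_1,\ldots,n-z_0\}$, and let $\boldsymbol{\pi}=(\pi_k)_{k\in\mathcal{S}}$ be its stationary distribution, i.e. the probability vector on $\mathcal{S}$ satisfying $\boldsymbol{\pi}Q=0$, where $Q$ is the transition rate matrix with $q_{k,k-1}=(k-z_1)(n-k)/(n-1)$, $q_{k,k+1}=k(n-k-z_0)/(n-1)$, $q_{k,k}=-q_{k,k-1}-q_{k,k+1}$ and all other entries zero. Then the expected number of opinion-1 holders at equilibrium is $$\mathbb{E}_{\boldsymbol{\pi}}N_1=\sum_{k\in\mathcal{S}}k\,\pi_k=n\,\frac{z_1}{z_0+z_1}.$$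
   Context: Model: $n$ users are the nodes of a complete graph without self-loops, each holding opinion $0$ or $1$. Among them, $z_0\ge 0$ are 0-zealots (always hold opinion 0) and $z_1\ge0$ are 1-zealots (always hold opinion 1), with $z_0+z_1>0$ and $z_0+z_1\le n$; the remaining users are non-zealots. Each user has an independent exponential clock of rate 1; when a non-zealot's clock rings, that user picks one of the other $n-1$ users uniformly at random and adopts their current opinion; zealots never change opinion. $N_1(t)$ counts users holding opinion 1 at time $t$, including 1-zealots; it is a birth-and-death chain on $\mathcal{S}$ with the rates given in the claim. *)

(* Defs.v *)
From HB Require Import structures.
From mathcomp Require Import all_boot all_order all_algebra.
Set Implicit Arguments. Unset Strict Implicit. Unset Printing Implicit Defensive.
Import Order.TTheory GRing.Theory Num.Theory.
Local Open Scope ring_scope.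

Definition in_S (n z0 z1 k : nat) : bool := (z1 <= k)%N && (k <= n - z0)%N.

Definition rate_down (R : fieldType) (n z0 z1 k : nat) : R :=
  ((k - z1)%:R * (n - k)%:R) / (n - 1)%:R.

Definition rate_up (R : fieldType) (n z0 z1 k : nat) : R :=
  (k%:R * (n - k - z0)%:R) / (n - 1)%:R.

Definition Qrate (R : fieldType) (n z0 z1 k j : nat) : R :=
  if j.+1 == k then rate_down R n z0 z1 k
  else if j == k.+1 then rate_up R n z0 z1 k
  else if j == k then - (rate_down R n z0 z1 k + rate_up R n z0 z1 k)
  else 0.

Definition stationary (R : realFieldType) (n z0 z1 : nat) (pi : nat -> R) : Prop :=
  [/\ (forall k, in_S n z0 z1 k -> 0 <= pi k),
      \sum_(z1 <= k < (n - z0).+1) pi k = 1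
    & forall j, in_S n z0 z1 j ->
        \sum_(z1 <= k < (n - z0).+1) pi k * Qrate R n z0 z1 k j = 0].

(* Main.v *)
Require Import Defs.
From HB Require Import structures.
From mathcomp Require Import all_boot all_order all_algebra.
From mathcomp Require Import zify ring lra.
Import Order.TTheory GRing.Theory Num.Theory.
Local Open Scope ring_scope.

Lemma sum_if_eq (R : realFieldType) (a c m : nat) (x : R) :
  \sum_(a <= j < c) (if j == m then x else 0) = if (a <= m < c)%N then x else 0.
Proof. by rewrite -big_mkcond /= big_nat1_eq. Qed.

Lemma row_drift (R : realFieldType) (n z0 z1 k : nat) :
  in_S n z0 z1 k ->
  \sum_(z1 <= j < (n - z0).+1) j%:R * Qrate R n z0 z1 k j
  = rate_up R n z0 z1 k - rate_down R n z0 z1 k.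
Proof.
move=> /andP[ha hb].
set D := rate_down R n z0 z1 k; set U := rate_up R n z0 z1 k.
have -> : \sum_(z1 <= j < (n - z0).+1) j%:R * Qrate R n z0 z1 k j =
  \sum_(z1 <= j < (n - z0).+1) ((if j == k.+1 then k.+1%:R * U else 0)
     + (if j.+1 == k then j%:R * D else 0)
     + (if j == k then - (k%:R * (D + U)) else 0)).
  apply: eq_bigr => j _; rewrite /Qrate -/D -/U.
  case: (eqVneq j.+1 k) => [<-|h1].
    have -> : (j == j.+2) = false by lia.
    have -> : (j == j.+1) = false by lia.
    by rewrite add0r addr0.
  case: (eqVneq j k.+1) => [->|h2].
    have -> : (k.+1 == k) = false by lia.
    by rewrite addr0 addr0.
  case: (eqVneq j k) => [->|h3]; last by rewrite mulr0 !addr0.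
  by rewrite !add0r mulrN.
rewrite !big_split /= !sum_if_eq.
have U0 : (k = n - z0)%N -> U = 0.
  move=> e; rewrite /U /rate_up.
  have -> : (n - k - z0 = 0)%N by lia.
  by rewrite mulr0 mul0r.
have D0 : (k = z1)%N -> D = 0.
  move=> e; rewrite /D /rate_down.
  have -> : (k - z1 = 0)%N by lia.
  by rewrite !mul0r.
have -> : (if (z1 <= k.+1 < (n - z0).+1)%N then k.+1%:R * U else 0) = k.+1%:R * U.
  case: ifP => // h; rewrite U0 ?mulr0 //; lia.
have -> : \sum_(z1 <= j < (n - z0).+1) (if j.+1 == k then j%:R * D else 0)
          = k.-1%:R * D.
  case: (eqVneq k z1) => [e|ne].
    rewrite D0 // mulr0 big1 // => j _; case: ifP => //; by rewrite mulr0.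
  have [k' ek] : exists k', k = k'.+1 by exists k.-1; lia.
  rewrite ek /=.
  have -> : \sum_(z1 <= j < (n - z0).+1) (if j.+1 == k'.+1 then j%:R * D else 0)
     = \sum_(z1 <= j < (n - z0).+1) (if j == k' then k'%:R * D else 0).
    by apply: eq_bigr => j _; rewrite eqSS; case: eqP => [->|].
  rewrite sum_if_eq ifT //; lia.
have -> : (z1 <= k < (n - z0).+1)%N by lia.
case: (posnP k) => [k0|kpos].
  rewrite D0; last lia.
  rewrite k0 /= !mulr0n; ring.
clearbody D U.
have [m em] : exists m, k = m.+1 by exists k.-1; lia.
rewrite em /= -[m.+2]addn1 -[m.+1]addn1 !natrD; ring.
Qed.

Theorem theorem3 (R : realFieldType) (n z0 z1 : nat) (pi : nat -> R) :
  (0 < z0 + z1)%N -> (z0 + z1 <= n)%N ->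
  stationary n z0 z1 pi ->
  \sum_(z1 <= k < (n - z0).+1) k%:R * pi k = n%:R * z1%:R / (z0 + z1)%:R.
Proof.
move=> hz hn [hpos hsum hst].
have sne0 : (z0 + z1)%:R != 0 :> R by rewrite pnatr_eq0 -lt0n.
case: (eqVneq n 1%N) => [n1|n1].
  subst n.
  have e : (1 - z0 = z1)%N by lia.
  rewrite e in hsum *.
  have -> : (z0 + z1 = 1)%N by lia.
  rewrite big_nat1 in hsum; rewrite big_nat1 hsum.
  by rewrite mulr1 mul1r divr1.
have nne0 : (n - 1)%:R != 0 :> R by rewrite pnatr_eq0; lia.
have H0 : \sum_(z1 <= j < (n - z0).+1) j%:R *
     (\sum_(z1 <= k < (n - z0).+1) pi k * Qrate R n z0 z1 k j) = 0.
  rewrite big_nat_cond big1 // => j /andP[/andP[h1 h2] _].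
  rewrite hst ?mulr0 // /in_S; apply/andP; split; lia.
have H1 : \sum_(z1 <= k < (n - z0).+1) pi k *
     ((z1 * n)%:R - k%:R * (z0 + z1)%:R) / (n - 1)%:R = 0.
  apply: (etrans _ H0).
  under [RHS]eq_bigr do rewrite big_distrr.
  rewrite exchange_big /= big_nat_cond [RHS]big_nat_cond.
  apply: eq_bigr => k /andP[/andP[h1 h2] _].
  under eq_bigr do rewrite mulrCA.
  rewrite -big_distrr /= row_drift; last by rewrite /in_S; apply/andP; split; lia.
  rewrite -mulrA; congr (_ * _).
  rewrite /rate_up /rate_down -mulrBl; congr (_ / _).
  rewrite (natrB _ (_ : z0 <= n - k)%N); last lia.
  rewrite (natrB _ (_ : k <= n)%N); last lia.
  rewrite (natrB _ (_ : z1 <= k)%N); last lia.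
  rewrite natrM natrD; ring.
have H2 : (z1 * n)%:R - (z0 + z1)%:R *
    \sum_(z1 <= k < (n - z0).+1) k%:R * pi k = 0 :> R.
  have : \sum_(z1 <= k < (n - z0).+1)
      ((z1 * n)%:R * pi k - (z0 + z1)%:R * (k%:R * pi k)) = 0 :> R.
    apply: (mulIf (invr_neq0 nne0)); rewrite mul0r -[RHS]H1 mulr_suml.
    apply: eq_bigr => k _; ring.
  by rewrite sumrB -!mulr_sumr hsum mulr1.
have e : (z0 + z1)%:R * \sum_(z1 <= k < (n - z0).+1) k%:R * pi k = (z1 * n)%:R :> R.
  by apply/eqP; rewrite eq_sym -subr_eq0 H2.
have -> : (n%:R * z1%:R : R) = (z0 + z1)%:R * \sum_(z1 <= k < (n - z0).+1) k%:R * pi k.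
  by rewrite e natrM mulrC.
by rewrite mulrAC divff // mul1r.
Qed.
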